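(* The Recursive Measure satisfies the added-blocker postulate. For every SVG $\mathcal{G}=(N,\mathcal{W})$ and all $i,j\in N$ with $j$ not a dummy in $\mathcal{G}$: $$\frac{RM'^+_i(\mathcal{G})}{RM'^+_j(\mathcal{G})}=\frac{RM'^+_i(\mathcal{G}^Y)}{RM'^+_j(\mathcal{G}^Y)}\qquad\text{and}\qquad\frac{RM'^-_i(\mathcal{G})}{RM'^-_j(\mathcal{G})}=\frac{RM'^-_i(\mathcal{G}^N)}{RM'^-_j(\mathcal{G}^N)}.$$
   Context: A simple voting game (SVG) is a pair $\mathcal{G}=(N,\mathcal{W})$ with $N$ a nonempty finite set of players and $\mathcal{W}\subseteq 2^N$ monotone, $\emptyset\notin\mathcal{W}$, $N\in\mathcal{W}$. Divisions are identified with their YES-sets. Decisiveness and success: - Player $k$ is YES-decisive in $S$ if $k\in S\in\mathcal{W}$ and $S\setminus\{k\}\notin\mathcal{W}$. - Player $k$ is NO-decisive in $S$ if $k\notin S\notin\mathcal{W}$ and $S\cup\{k\}\in\mathcal{W}$. - A dummy is never decisive. - Player $k$ is successful in $S$ if ($k\in S\in\mathcal{W}$) or ($k\notin S\notin\mathcal{W}$). Loyal children: if $S\in\mathcal{W}$, they are the sets $S\setminus\{m\}\in\mathcal{W}$ with $m\in S$. If $S\notin\mathcal{W}$, they are the sets $S\cup\{m\}\notin\mathcal{W}$ with $m\notin S$. Recursive efficacy score $\alpha_k(S)$: - $\alpha_k(S)=1$ if $k$ is decisive; - $\alpha_k(S)=0$ if $k$ is not successful; - otherwise, the average of $\alpha_k$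 over the loyal children. For a game with $m$ players: - the a priori RM YES-power is $RM'^+_k=2^{-m}\sum_{S\ni k}\alpha_k(S)$; - the a priori RM NO-power is $RM'^-_k=2^{-m}\sum_{S\not\ni k}\alpha_k(S)$. For a new player $0\notin N$: - $\mathcal{G}^Y=(N\cup\{0\},\{S\cup\{0\}:S\in\mathcal{W}\})$; - $\mathcal{G}^N=(N\cup\{0\},\{S\cup\{0\}:S\subseteq N\}\cup\mathcal{W})$. *)

(* Defs.v *)
From mathcomp Require Import all_boot all_order all_algebra.
Set Implicit Arguments. Unset Strict Implicit. Unset Printing Implicit Defensive.
Import Order.TTheory GRing.Theory Num.Theory.
Local Open Scope ring_scope.

Section SVG.
Variable T : finType.
(* A game is given by its set of winning coalitions W (as a boolean
   predicate on coalitions); the SVG axioms are hypotheses of the theorem. *)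
Variable W : {set T} -> bool.

Definition yes_decisive (k : T) (S : {set T}) : bool :=
  [&& k \in S, W S & ~~ W (S :\ k)].
Definition no_decisive (k : T) (S : {set T}) : bool :=
  [&& k \notin S, ~~ W S & W (k |: S)].
Definition decisive (k : T) (S : {set T}) : bool :=
  yes_decisive k S || no_decisive k S.
Definition successful (k : T) (S : {set T}) : bool :=
  ((k \in S) && W S) || ((k \notin S) && ~~ W S).

Definition dummy (k : T) : Prop := forall S : {set T}, ~~ decisive k S.

Definition loyal_children (S : {set T}) : seq {set T} :=
  if W S then [seq S :\ m | m <- enum S & W (S :\ m)]
  else [seq m |: S | m <- enum (~: S) & ~~ W (m |: S)].

(* The recursion is well founded (winning children shrink, losing children
   grow); we implement it with fuel, #|T|.+1 being always sufficient. *)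
Fixpoint alpha_fuel (n : nat) (k : T) (S : {set T}) : rat :=
  match n with
  | 0 => 0
  | n'.+1 =>
    if decisive k S then 1
    else if ~~ successful k S then 0
    else let ch := loyal_children S in
         (\sum_(U <- ch) alpha_fuel n' k U) / (size ch)%:R
  end.

Definition alpha (k : T) (S : {set T}) : rat := alpha_fuel #|T|.+1 k S.

Definition RM_yes (k : T) : rat :=
  (\sum_(S : {set T} | k \in S) alpha k S) / (2 ^ #|T|)%:R.
Definition RM_no (k : T) : rat :=
  (\sum_(S : {set T} | k \notin S) alpha k S) / (2 ^ #|T|)%:R.

End SVG.

(* The new player 0 is None : option T. *)
Definition addY (T : finType) (W : {set T} -> bool) : {set option T} -> bool :=
  fun S => (None \in S) && W [set x | Some x \in S].
Definition addN (T : finType) (W : {set T} -> bool) : {set option T} -> bool :=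
  fun S => (None \in S) || W [set x | Some x \in S].

(* Main.v *)
Require Import Defs.
From mathcomp Require Import all_boot all_order all_algebra.
Import GRing.Theory Num.Theory.
Local Open Scope ring_scope.

Lemma sum_opt (T : finType) (G : option T -> rat) :
  \sum_(o : option T) G o = G None + \sum_(x : T) G (Some x).
Proof.
rewrite /index_enum !unlock /= ; congr (_ + _).
have -> : isFinite.enum_subdef (Finite.class T) = Finite.enum T by rewrite unlock.
by elim: (Finite.enum T) => //= x s ->.
Qed.

Lemma size_sum (A : Type) (s : seq A) : (size s)%:R = \sum_(x <- s) (1 : rat).
Proof.
elim: s => [|x s IH]; first by rewrite big_nil.
by rewrite big_cons /= -IH -addn1 natrD addrC.
Qed.

Lemma ratio (a b c : rat) : c != 0 -> (a / c) / (b / c) = a / b.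
Proof. by move=> Hc; rewrite invf_div mulrA divfK. Qed.

Section Gen.
Variables (T : finType) (W : {set T} -> bool).

Definition dep (S : {set T}) := if W S then #|S| else #|~: S|.

Lemma dep_child S U : U \in loyal_children W S ->
  dep U = (dep S).-1 /\ (0 < dep S)%N.
Proof.
rewrite /loyal_children /dep; case HS: (W S) => /mapP [m];
  rewrite mem_filter mem_enum => /andP [Hw Hm] ->.
- rewrite Hw; have := cardsD1 m S; rewrite Hm => ->; by [].
- rewrite (negbTE Hw).
  have -> : ~: (m |: S) = (~: S) :\ m.
    by apply/setP => x; rewrite !inE negb_or.
  have := cardsD1 m (~: S); rewrite Hm => ->; by [].
Qed.

Lemma dep_le S : (dep S <= #|T|)%N.
Proof. by rewrite /dep; case: (W S); apply: max_card. Qed.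

Lemma alpha_stable n m k S : (dep S < n)%N -> (dep S < m)%N ->
  alpha_fuel W n k S = alpha_fuel W m k S.
Proof.
elim: n m S => [|n IH] [|m] S //= Hn Hm.
case: ifP => // _; case: ifP => // _.
congr (_ / _); apply: eq_big_seq => U HU.
have [HU1 HU2] := dep_child _ _ HU.
apply: IH; rewrite HU1; move: Hn Hm HU2; case: (dep S) => //.
Qed.

End Gen.

Section Y.
Variables (T : finType) (W : {set T} -> bool).

Definition liftY (S : {set T}) : {set option T} :=
  [set o | if o is Some x then x \in S else true].

Lemma inY x S : (Some x \in liftY S) = (x \in S).
Proof. by rewrite inE. Qed.
Lemma inY0 S : None \in liftY S.
Proof. by rewrite inE. Qed.
Lemma projY S : [set x | Some x \in liftY S] = S.
Proof. by apply/setP => x; rewrite !inE. Qed.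
Lemma addY_lift S : addY W (liftY S) = W S.
Proof. by rewrite /addY inY0 projY. Qed.
Lemma liftYD1 S x : liftY S :\ Some x = liftY (S :\ x).
Proof. by apply/setP => [[y|]]; rewrite !inE. Qed.
Lemma liftYU1 S x : Some x |: liftY S = liftY (x |: S).
Proof. by apply/setP => [[y|]]; rewrite !inE. Qed.

Lemma decY k S : decisive (addY W) (Some k) (liftY S) = decisive W k S.
Proof.
by rewrite /decisive /yes_decisive /no_decisive inY liftYD1 liftYU1 !addY_lift.
Qed.
Lemma succY k S : successful (addY W) (Some k) (liftY S) = successful W k S.
Proof. by rewrite /successful inY !addY_lift. Qed.

Lemma childrenY (G : {set option T} -> rat) S :
  \sum_(U <- loyal_children (addY W) (liftY S)) G U =
  \sum_(U <- loyal_children W S) G (liftY U).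
Proof.
rewrite /loyal_children addY_lift; case: (W S).
- rewrite !big_map !big_filter !big_enum_cond big_mkcond sum_opt.
  have -> : addY W (liftY S :\ None) = false by rewrite /addY !inE eqxx.
  rewrite andbF add0r [RHS]big_mkcond; apply: eq_bigr => x _.
  by rewrite inY liftYD1 addY_lift.
- rewrite !big_map !big_filter !big_enum_cond big_mkcond sum_opt.
  rewrite inE inY0 /= add0r [RHS]big_mkcond; apply: eq_bigr => x _.
  by rewrite liftYU1 addY_lift !inE.
Qed.

Lemma alphaY n k S :
  alpha_fuel (addY W) n (Some k) (liftY S) = alpha_fuel W n k S.
Proof.
elim: n S => [//|n IH] S /=.
rewrite decY succY; case: ifP => // _; case: ifP => // _.
rewrite !size_sum !childrenY; congr (_ / _); apply: eq_bigr => U _; exact: IH.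
Qed.

Lemma sumY (i : T) (F : {set option T} -> rat) :
  (forall S' : {set option T}, Some i \in S' -> None \notin S' -> F S' = 0) ->
  \sum_(S' : {set option T} | Some i \in S') F S' =
  \sum_(S : {set T} | i \in S) F (liftY S).
Proof.
move=> HF; rewrite (bigID (fun S' : {set option T} => None \in S')) /=.
rewrite [X in _ + X]big1 ?addr0; last by move=> S' /andP [H1 H2]; exact: HF.
rewrite (reindex_onto liftY (fun S' : {set option T} => [set x | Some x \in S'])).
  by apply: eq_bigl => S; rewrite inY inY0 projY eqxx !andbT.
move=> S' /andP [_ HN]; apply/setP => [[x|]]; rewrite !inE //.
Qed.

Lemma RMY k : RM_yes (addY W) (Some k) =
  (\sum_(S : {set T} | k \in S) alpha W k S) / (2 ^ #|{: option T}|)%:R.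
Proof.
rewrite /RM_yes; congr (_ / _); rewrite sumY.
  apply: eq_bigr => S _; rewrite /alpha alphaY card_option.
  by have Hd := dep_le _ W S; apply: alpha_stable; apply: leq_ltn_trans Hd _; rewrite ?ltnS ?leqnSn.
move=> S' Hi HN; rewrite /alpha /= /decisive /yes_decisive /no_decisive
  /successful Hi /addY (negbTE HN) /=.
by [].
Qed.

End Y.

Section N.
Variables (T : finType) (W : {set T} -> bool).

Definition liftN (S : {set T}) : {set option T} :=
  [set o | if o is Some x then x \in S else false].

Lemma inN x S : (Some x \in liftN S) = (x \in S).
Proof. by rewrite inE. Qed.
Lemma inN0 S : (None \in liftN S) = false.
Proof. by rewrite inE. Qed.
Lemma projN S : [set x | Some x \in liftN S] = S.
Proof. by apply/setP => x; rewrite !inE. Qed.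
Lemma addN_lift S : addN W (liftN S) = W S.
Proof. by rewrite /addN inN0 projN. Qed.
Lemma liftND1 S x : liftN S :\ Some x = liftN (S :\ x).
Proof. by apply/setP => [[y|]]; rewrite !inE. Qed.
Lemma liftNU1 S x : Some x |: liftN S = liftN (x |: S).
Proof. by apply/setP => [[y|]]; rewrite !inE. Qed.

Lemma decN k S : decisive (addN W) (Some k) (liftN S) = decisive W k S.
Proof.
by rewrite /decisive /yes_decisive /no_decisive inN liftND1 liftNU1 !addN_lift.
Qed.
Lemma succN k S : successful (addN W) (Some k) (liftN S) = successful W k S.
Proof. by rewrite /successful inN !addN_lift. Qed.

Lemma childrenN (G : {set option T} -> rat) S :
  \sum_(U <- loyal_children (addN W) (liftN S)) G U =
  \sum_(U <- loyal_children W S) G (liftN U).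
Proof.
rewrite /loyal_children addN_lift; case: (W S).
- rewrite !big_map !big_filter !big_enum_cond big_mkcond sum_opt.
  rewrite inN0 /= add0r [RHS]big_mkcond; apply: eq_bigr => x _.
  by rewrite inN liftND1 addN_lift.
- rewrite !big_map !big_filter !big_enum_cond big_mkcond sum_opt.
  have -> : addN W (None |: liftN S) = true by rewrite /addN !inE eqxx.
  rewrite andbF add0r [RHS]big_mkcond; apply: eq_bigr => x _.
  by rewrite liftNU1 addN_lift !inE.
Qed.

Lemma alphaN n k S :
  alpha_fuel (addN W) n (Some k) (liftN S) = alpha_fuel W n k S.
Proof.
elim: n S => [//|n IH] S /=.
rewrite decN succN; case: ifP => // _; case: ifP => // _.
rewrite !size_sum !childrenN; congr (_ / _); apply: eq_bigr => U _; exact: IH.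
Qed.

Lemma sumN (i : T) (F : {set option T} -> rat) :
  (forall S' : {set option T}, Some i \notin S' -> None \in S' -> F S' = 0) ->
  \sum_(S' : {set option T} | Some i \notin S') F S' =
  \sum_(S : {set T} | i \notin S) F (liftN S).
Proof.
move=> HF; rewrite (bigID (fun S' : {set option T} => None \notin S')) /=.
rewrite [X in _ + X]big1 ?addr0; last by move=> S' /andP [H1 H2]; apply: HF; rewrite // -(negbK (None \in S')).
rewrite (reindex_onto liftN (fun S' : {set option T} => [set x | Some x \in S'])).
  by apply: eq_bigl => S; rewrite inN inN0 projN eqxx !andbT.
move=> S' /andP [_ HN]; apply/setP => [[x|]]; rewrite !inE //.
by rewrite (negbTE HN).
Qed.

Lemma RMN k : RM_no (addN W) (Some k) =
  (\sum_(S : {set T} | k \notin S) alpha W k S) / (2 ^ #|{: option T}|)%:R.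
Proof.
rewrite /RM_no; congr (_ / _); rewrite sumN.
  apply: eq_bigr => S _; rewrite /alpha alphaN card_option.
  by have Hd := dep_le _ W S; apply: alpha_stable; apply: leq_ltn_trans Hd _; rewrite ?ltnS ?leqnSn.
move=> S' Hi HN; rewrite /alpha /= /decisive /yes_decisive /no_decisive
  /successful (negbTE Hi) /addN HN /=.
by [].
Qed.

End N.

Theorem theorem9 (T : finType) (W : {set T} -> bool)
  (Hmono : forall S U : {set T}, S \subset U -> W S -> W U)
  (H0 : ~~ W set0) (HT : W setT)
  (i j : T) (Hj : ~ dummy W j) :
  RM_yes W i / RM_yes W j = RM_yes (addY W) (Some i) / RM_yes (addY W) (Some j)
  /\
  RM_no W i / RM_no W j = RM_no (addN W) (Some i) / RM_no (addN W) (Some j).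
Proof.
have nz : forall n, (2 ^ n)%:R != 0 :> rat by move=> n; rewrite pnatr_eq0 expn_eq0.
split.
- by rewrite !RMY /RM_yes !ratio.
- by rewrite !RMN /RM_no !ratio.
Qed.
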